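(* Assume $\mu<0$ and conditions (C1) and (C2). For $T\ge1$ let $\mu^*_T=\mathbb E^*_{\pi^*}(f(X_1,Y_{1+T}))$. Then the limit $\mu^*_\infty=\lim_{T\to\infty}\mu^*_T$ exists (and equals $\pi^*_1\otimes\pi^*_2(f)$, $\pi^*_1,\pi^*_2$ the marginals of $\pi^*$), and $\mu^*_\infty<\mu^*:=\pi^*(f)$.
   Context: Let $E$ be a finite set and $P,Q$ irreducible aperiodic stochastic $E\times E$ matrices with invariant probability vectors $\pi_P,\pi_Q$; $\pi=\pi_P\otimes\pi_Q$. Let $f:E\times E\to\mathbb Z$ with gcd of its values equal to $1$; $\nu(f)=\sum f\,d\nu$; $\mu=\pi(f)$. A cycle w.r.t. $P$ is a sequence $x_1,\dots,x_n$ with $P(x_k,x_{k+1})>0$ for all $k$, indices mod $n$. (C1): for some $n\ge1$ there are cycles $x_1,\dots,x_n$ w.r.t. $P$ and $y_1,\dots,y_n$ w.r.t. $Q$ with $\sum_kf(x_k,y_k)>0$. (C2): for every $T\ge1$ there are $n\ge1$ and cycles $x_1,\dots,x_n$ w.r.t. $P$ and $y_1,\dots,y_n$ w.r.t. $Q$ with $\sum_kf(x_k,y_k)\ne\sum_kf(x_k,y_{k+T\bmod n})$. Let $\Phi(\theta)_{(x,y),(x',y')}=e^{\theta f(x',y')}P_{x,x'}Q_{y,y'}$, $\varphi(\theta)$ its spectral radius, $\theta^*>0$ the unique positive solution of $\varphi(\theta)=1$, $r^*$ a positive right eigenvector of $\Phi(\theta^* )$ for eigenvalue 1, $R^*_{(x,y),(x',y')}=\frac{r^*(x',y')}{r^*(x,y)}\Phi(\theta^*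 )_{(x,y),(x',y')}$, and $\pi^*$ the invariant probability vector of $R^*$. $\mathbb P^*_{\pi^*}$ (expectation $\mathbb E^*_{\pi^*}$) is the law under which $(X_n,Y_n)_{n\ge0}$ is a stationary Markov chain on $E^2$ with transition matrix $R^*$. *)

(* Defs.v *)
From HB Require Import structures.
From mathcomp Require Import all_boot all_order all_algebra.
From mathcomp Require Import all_classical all_reals all_analysis.
From mathcomp Require Import complex.
Set Implicit Arguments. Unset Strict Implicit. Unset Printing Implicit Defensive.
Import Order.TTheory GRing.Theory Num.Theory.
Local Open Scope ring_scope.
Local Open Scope classical_set_scope.

Section MarkovDefs.
Variable R : realType.

Definition fmx_one (T : finType) : T -> T -> R :=
  fun x y => if x == y then 1 else 0.

Fixpoint fmx_pow (T : finType) (A : T -> T -> R) (n : nat) : T -> T -> R :=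
  match n with
  | 0 => @fmx_one T
  | m.+1 => fun x y => \sum_(z : T) fmx_pow A m x z * A z y
  end.

Definition stochastic (T : finType) (A : T -> T -> R) : Prop :=
  (forall x y, 0 <= A x y) /\ (forall x, \sum_(y : T) A x y = 1).

Definition irreducible (T : finType) (A : T -> T -> R) : Prop :=
  forall x y, exists n : nat, 0 < fmx_pow A n x y.

(* aperiodic: for every state x, gcd {n >= 1 | A^n(x,x) > 0} = 1, i.e. no
   d >= 2 divides all return times of x *)
Definition aperiodic (T : finType) (A : T -> T -> R) : Prop :=
  forall (x : T) (d : nat), (1 < d)%N ->
    ~ (forall n : nat, (0 < n)%N -> 0 < fmx_pow A n x x -> (d %| n)%N).

Definition invariant_prob (T : finType) (A : T -> T -> R) (p : T -> R) : Prop :=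
  [/\ forall x, 0 <= p x, \sum_(x : T) p x = 1
    & forall y, \sum_(x : T) p x * A x y = p y].

Definition is_cycle (T : finType) (A : T -> T -> R) (n : nat) (x : nat -> T) : Prop :=
  (0 < n)%N /\ forall k : nat, (k < n)%N -> 0 < A (x k) (x (k.+1 %% n)%N).

Definition cmx_of (T : finType) (A : T -> T -> R) : 'M[R[i]]_#|T| :=
  \matrix_(i < #|T|, j < #|T|) ((A (enum_val i) (enum_val j))%:C)%C.

Definition spectral_radius (T : finType) (A : T -> T -> R) : R :=
  sup [set ComplexField.Normc.normc z | z in [set z : R[i] | root (char_poly (cmx_of A)) z]].

Definition Phi (E : finType) (P Q : E -> E -> R) (f : E -> E -> int) (theta : R)
  : (E * E)%type -> (E * E)%type -> R :=
  fun s s' => expR (theta * (f s'.1 s'.2)%:~R) * P s.1 s'.1 * Q s.2 s'.2.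

Definition tilted (E : finType) (P Q : E -> E -> R) (f : E -> E -> int) (theta : R)
  (r : (E * E)%type -> R) : (E * E)%type -> (E * E)%type -> R :=
  fun s s' => r s' / r s * Phi P Q f theta s s'.

(* E_{pi}(f(X_1, Y_{1+T})) for the stationary chain with transition matrix A
   and initial (= stationary) law p: (X_1,Y_1) ~ p and
   (X_{1+T},Y_{1+T}) | (X_1,Y_1)=s ~ A^T(s, .) *)
Definition lagged_mean (E : finType) (A : (E * E)%type -> (E * E)%type -> R)
  (p : (E * E)%type -> R) (f : E -> E -> int) (T : nat) : R :=
  \sum_(s : E * E) \sum_(s' : E * E) p s * fmx_pow A T s s' * (f s.1 s'.2)%:~R.

End MarkovDefs.

(* Main.v *)
Require Import Defs.
From HB Require Import structures.
From mathcomp Require Import all_boot all_order all_algebra.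
From mathcomp Require Import all_classical all_reals all_analysis.
From mathcomp Require Import complex.
From mathcomp Require Import zify ring lra.
Set Implicit Arguments. Unset Strict Implicit. Unset Printing Implicit Defensive.
Import Order.TTheory GRing.Theory Num.Theory.
Local Open Scope ring_scope.

Section Pow.
Variable R : realType.
Variable T : finType.
Implicit Types A : T -> T -> R.

Lemma pow_ge0 A n x y : (forall a b, 0 <= A a b) -> 0 <= fmx_pow A n x y.
Proof.
move=> A0; elim: n x y => [|n IH] x y /=.
  by rewrite /fmx_one; case: (x == y).
by apply: sumr_ge0 => z _; rewrite mulr_ge0.
Qed.

Lemma pow_add A m n x y :
  fmx_pow A (m + n) x y = \sum_z fmx_pow A m x z * fmx_pow A n z y.
Proof.
elim: n x y => [|n IH] x y.
  rewrite addn0 /= /fmx_one (bigD1 y) //= eqxx mulr1 big1 ?addr0 //.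
  by move=> z /negbTE; rewrite eq_sym => ->; rewrite mulr0.
rewrite addnS /=.
under eq_bigr do rewrite IH mulr_suml.
rewrite exchange_big /=; apply: eq_bigr => z _.
by rewrite mulr_sumr; apply: eq_bigr => w _; rewrite mulrA.
Qed.

Lemma sum_pos (I : finType) (F : I -> R) i :
  (forall j, 0 <= F j) -> 0 < F i -> 0 < \sum_j F j.
Proof.
move=> F0 Fi; rewrite (bigD1 i) //=; apply: ltr_pwDl => //.
by apply: sumr_ge0.
Qed.

Lemma pow_pos_mul A m n x y z : (forall a b, 0 <= A a b) ->
  0 < fmx_pow A m x z -> 0 < fmx_pow A n z y -> 0 < fmx_pow A (m + n) x y.
Proof.
move=> A0 h1 h2; rewrite pow_add; apply: (@sum_pos _ _ z) => [w|].
  by rewrite mulr_ge0 // pow_ge0.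
by rewrite mulr_gt0.
Qed.

Lemma pow1 A x y : fmx_pow A 1 x y = A x y.
Proof.
rewrite /= (bigD1 x) //= /fmx_one eqxx mul1r big1 ?addr0 //.
by move=> z /negbTE; rewrite eq_sym => ->; rewrite mul0r.
Qed.

Lemma return_times (S : nat -> Prop) : S 0%N ->
  (forall a b, S a -> S b -> S (a + b)%N) ->
  (forall d, (1 < d)%N -> ~ (forall n, (0 < n)%N -> S n -> (d %| n)%N)) ->
  exists N, forall n, (N <= n)%N -> S n.
Proof.
move=> S0 Sadd aper.
have Smul k a : S a -> S (k * a)%N.
  by move=> Sa; elim: k => [|k IH]; rewrite ?mul0n // mulSn; apply: Sadd.
have [n0 [n0pos Sn0]] : exists n, (0 < n)%N /\ S n.
  apply: contrapT => hn; apply: (aper 2%N) => // n n0 Sn.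
  by exfalso; apply: hn; exists n.
pose D g := exists a b, S a /\ S b /\ a = (b + g)%N.
have exD : exists g, `[< (0 < g)%N /\ D g >].
  by exists n0; apply/asboolP; split=> //; exists n0, 0%N; rewrite add0n.
case: (ex_minnP exD) => g /asboolP [gpos [a [b [Sa [Sb eab]]]]] gmin.
have divg n : (0 < n)%N -> S n -> (g %| n)%N.
  move=> npos Sn; set q := (n %/ g)%N; set r := (n %% g)%N.
  have nq : n = (q * g + r)%N by rewrite /q /r -divn_eq.
  case: (boolP (g %| n)%N) => // ndiv; exfalso.
  have rpos : (0 < r)%N by rewrite lt0n; exact: ndiv.
  have : (g <= r)%N.
    apply: gmin; apply/asboolP; split=> //.
    exists (n + q * b)%N, (q * a)%N; split; first by apply: Sadd => //; apply: Smul.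
    split; first by apply: Smul.
    by rewrite nq eab mulnDr; lia.
  by rewrite leqNgt ltn_mod gpos.
have g1 : g = 1%N.
  apply/eqP; rewrite eqn_leq gpos andbT leqNgt; apply/negP => g2.
  by apply: (aper g g2) => n; apply: divg.
case: (posnP b) => [b0|bpos].
  exists 0%N => n _; have -> : n = (n * a)%N by rewrite eab b0 g1 muln1.
  by apply: Smul.
exists (b * b)%N => n hn.
set q := (n %/ b)%N; set r := (n %% b)%N.
have nq : n = (q * b + r)%N by rewrite /q /r -divn_eq.
have rb : (r < b)%N by rewrite /r ltn_mod.
have qb : (b <= q)%N.
  rewrite leqNgt; apply/negP => qlt.
  have : (q * b <= (b - 1) * b)%N by rewrite leq_mul2r; apply/orP; right; lia.
  move: hn; rewrite nq; nia.
have -> : n = ((q - r) * b + r * a)%N.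
  rewrite eab g1 nq mulnBl mulnDr muln1 addnA subnK //.
  by rewrite leq_mul2r; apply/orP; right; apply: ltnW; apply: leq_trans qb.
by apply: Sadd; apply: Smul.
Qed.

Lemma unif_N (I : finType) (Pr : I -> nat -> Prop) :
  (forall i, exists N, forall n, (N <= n)%N -> Pr i n) ->
  exists N, forall n, (N <= n)%N -> forall i, Pr i n.
Proof.
move=> h.
suff : forall l : seq I, exists N, forall n, (N <= n)%N -> forall i, i \in l -> Pr i n.
  by case/(_ (enum I)) => N hN; exists N => n hn i; apply: hN; rewrite ?mem_enum.
elim=> [|i l [N hN]]; first by exists 0%N.
case: (h i) => Ni hi; exists (maxn N Ni) => n; rewrite geq_max => /andP[h1 h2] j.
by rewrite inE => /orP[/eqP->|jl]; [apply: hi | apply: hN].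
Qed.

Lemma primitive A : (forall a b, 0 <= A a b) -> irreducible A -> aperiodic A ->
  exists N, forall n, (N <= n)%N -> forall x y, 0 < fmx_pow A n x y.
Proof.
move=> A0 irr aper.
have hx x : exists N, forall n, (N <= n)%N -> 0 < fmx_pow A n x x.
  apply: (@return_times (fun n => 0 < fmx_pow A n x x)).
  - by rewrite /= /fmx_one eqxx ltr01.
  - by move=> a b ha hb; apply: (pow_pos_mul _ ha hb).
  - by move=> d d1 hd; apply: (aper x d d1) => n npos hn; apply: hd.
have hxy (p : T * T) : exists N, forall n, (N <= n)%N -> 0 < fmx_pow A n p.1 p.2.
  case: (hx p.1) => Nx hNx; case: (irr p.1 p.2) => m hm.
  exists (Nx + m)%N => n hn.
  have mn : (m <= n)%N by apply: leq_trans hn; apply: leq_addl.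
  have e : n = ((n - m) + m)%N by rewrite subnK.
  rewrite e; apply: (pow_pos_mul A0 _ hm); apply: hNx.
  by rewrite leq_subRL // addnC.
case: (unif_N hxy) => N hN; exists N => n hn x y.
exact: (hN n hn (x, y)).
Qed.

End Pow.

Section Conv.
Variable R : realType.
Variable T : finType.
Implicit Types A : T -> T -> R.

Definition app A (v : T -> R) (s : T) := \sum_u A s u * v u.

Lemma app_pow_add A a b v s :
  app (fmx_pow A (a + b)) v s = app (fmx_pow A a) (app (fmx_pow A b) v) s.
Proof.
rewrite /app; under eq_bigr do rewrite pow_add mulr_suml.
rewrite exchange_big /=; apply: eq_bigr => z _; rewrite mulr_sumr.
by apply: eq_bigr => u _; rewrite mulrA.
Qed.

Lemma pow_stoch A n x : stochastic A -> \sum_y fmx_pow A n x y = 1.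
Proof.
case=> A0 A1; elim: n x => [|n IH] x /=.
  rewrite /fmx_one (bigD1 x) //= eqxx big1 ?addr0 //.
  by move=> y /negbTE; rewrite eq_sym => ->.
rewrite exchange_big /=; rewrite -(IH x); apply: eq_bigr => z _.
by rewrite -mulr_sumr A1 mulr1.
Qed.

Lemma stat_pow A p n y : invariant_prob A p -> \sum_x p x * fmx_pow A n x y = p y.
Proof.
case=> _ _ inv; elim: n y => [|n IH] y /=.
  rewrite (bigD1 y) //= /fmx_one eqxx mulr1 big1 ?addr0 //.
  by move=> x /negbTE ->; rewrite mulr0.
under eq_bigr do rewrite mulr_sumr.
rewrite exchange_big /= -inv; apply: eq_bigr => z _.
by rewrite -IH mulr_suml; apply: eq_bigr => x _; rewrite mulrA.
Qed.

Lemma bounds_pres K (v : T -> R) lo hi s :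
  (forall a b, 0 <= K a b) -> (forall a, \sum_b K a b = 1) ->
  (forall u, lo <= v u <= hi) -> lo <= app K v s <= hi.
Proof.
move=> K0 K1 hv; rewrite /app; apply/andP; split.
  rewrite -[lo]mul1r -(K1 s) mulr_suml; apply: ler_sum => u _.
  by apply: ler_wpM2l => //; case/andP: (hv u).
rewrite -[hi]mul1r -(K1 s) mulr_suml; apply: ler_sum => u _.
by apply: ler_wpM2l => //; case/andP: (hv u).
Qed.

Lemma doeblin K (v : T -> R) lo hi d s :
  (forall a, \sum_b K a b = 1) -> (forall a b, d <= K a b) ->
  (forall u, lo <= v u <= hi) ->
  (1 - #|T|%:R * d) * lo + d * \sum_u v u <= app K v s <=
  (1 - #|T|%:R * d) * hi + d * \sum_u v u.
Proof.
move=> K1 Kd hv.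
have e : app K v s = \sum_u (K s u - d) * v u + d * \sum_u v u.
  rewrite /app mulr_sumr -big_split /=; apply: eq_bigr => u _; ring.
have e1 : 1 - #|T|%:R * d = \sum_u (K s u - d).
  by rewrite sumrB K1 sumr_const mulr_natl.
rewrite e e1 !mulr_suml; apply/andP; split; rewrite lerD2r; apply: ler_sum => u _;
  apply: ler_wpM2l; rewrite ?subr_ge0 //; by case/andP: (hv u).
Qed.

End Conv.

Section Conv2.
Variable R : realType.
Variable T : finType.
Implicit Types A : T -> T -> R.

Lemma app_pow0 A v s : app (fmx_pow A 0) v s = v s.
Proof.
rewrite /app /= (bigD1 s) //= /fmx_one eqxx mul1r big1 ?addr0 //.
by move=> u /negbTE; rewrite eq_sym => ->; rewrite mul0r.
Qed.

Lemma norm_le_sum (v : T -> R) u : `|v u| <= \sum_w `|v w|.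
Proof. by rewrite (bigD1 u) //= lerDl sumr_ge0. Qed.

Lemma mean_in (p : T -> R) (w : T -> R) lo hi :
  (forall x, 0 <= p x) -> \sum_x p x = 1 -> (forall u, lo <= w u <= hi) ->
  lo <= \sum_x p x * w x <= hi.
Proof.
move=> p0 p1 hw; apply/andP; split.
  rewrite -[lo]mul1r -p1 mulr_suml; apply: ler_sum => u _.
  by apply: ler_wpM2l => //; case/andP: (hw u).
rewrite -[hi]mul1r -p1 mulr_suml; apply: ler_sum => u _.
by apply: ler_wpM2l => //; case/andP: (hw u).
Qed.

Lemma geom_conv M p (v : T -> R) (s0 : T) N d :
  stochastic M -> invariant_prob M p -> 0 < d ->
  (forall a b, d <= fmx_pow M N a b) ->
  0 <= 1 - #|T|%:R * d < 1 /\ forall k Tt, (k * N <= Tt)%N -> forall s,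
    `|app (fmx_pow M Tt) v s - \sum_u p u * v u| <=
      (\sum_w `|v w| - - \sum_w `|v w|) * (1 - #|T|%:R * d) ^+ k.
Proof.
move=> stM invp d0 hd.
have M0 := stM.1.
set l := 1 - #|T|%:R * d.
have l0 : 0 <= l.
  have : \sum_(u : T) d <= \sum_u fmx_pow M N s0 u by apply: ler_sum => u _; apply: hd.
  by rewrite (pow_stoch N s0 stM) sumr_const subr_ge0 mulr_natl.
have l1 : l < 1.
  rewrite /l ltrBlDr ltrDl mulr_gt0 // ltr0n; apply/card_gt0P; by exists s0.
set C := \sum_w `|v w| - - \sum_w `|v w|.
split; first by rewrite l0 l1.
have ind : forall k, exists lo hi, hi - lo <= l ^+ k * C /\
    forall u, lo <= app (fmx_pow M (k * N)) v u <= hi.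
  elim=> [|k [lo [hi [hlh hb]]]].
    exists (- \sum_w `|v w|), (\sum_w `|v w|); split; first by rewrite expr0 mul1r.
    move=> u; rewrite mul0n app_pow0; have := norm_le_sum v u.
    by rewrite ler_norml => /andP[-> ->].
  set S := \sum_u app (fmx_pow M (k * N)) v u.
  exists (l * lo + d * S), (l * hi + d * S); split.
    have -> : l * hi + d * S - (l * lo + d * S) = l * (hi - lo) by ring.
    by rewrite exprS -mulrA ler_wpM2l.
  move=> u; rewrite mulSn app_pow_add.
  apply: doeblin => //; first by move=> a; apply: pow_stoch.
move=> k Tt hk s.
case: (ind k) => lo [hi [hlh hb]].
have eT : Tt = ((Tt - k * N) + k * N)%N by rewrite subnK.
have hs : lo <= app (fmx_pow M Tt) v s <= hi.
  rewrite eT app_pow_add; apply: bounds_pres => //.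
  - by move=> a b; apply: pow_ge0.
  - by move=> a; apply: pow_stoch.
have hm : lo <= \sum_u p u * v u <= hi.
  case: invp => p0 p1 pinv.
  have -> : \sum_u p u * v u = \sum_x p x * app (fmx_pow M Tt) v x.
    rewrite /app; under [RHS]eq_bigr do rewrite mulr_sumr.
    rewrite exchange_big /=; apply: eq_bigr => u _.
    rewrite -(stat_pow Tt u (And3 p0 p1 pinv)) mulr_suml; apply: eq_bigr => x _.
    by rewrite mulrA.
  apply: mean_in => // u; rewrite eT app_pow_add; apply: bounds_pres => //.
  - by move=> a b; apply: pow_ge0.
  - by move=> a; apply: pow_stoch.
rewrite mulrC; apply: le_trans hlh; move: hs hm => /andP[h1 h2] /andP[h3 h4].
rewrite ler_norml; apply/andP; split; lra.
Qed.

End Conv2.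

Lemma ln_le (R : realType) (a b : R) : 0 <= a -> 0 <= b -> (0 < a -> 0 < b) ->
  a * (ln b - ln a) <= b - a.
Proof.
move=> a0 b0 ab; case: (eqVneq a 0) => [->|an0]; first by rewrite mul0r subr0.
have ap : 0 < a by rewrite lt0r an0.
have bp := ab ap.
have e : ln b - ln a = ln (b / a) by rewrite lnM ?posrE ?invr_gt0 // lnV ?posrE.
rewrite e; have h := expR_ge1Dx (ln (b / a)); rewrite lnK ?posrE ?divr_gt0 // in h.
have -> : b - a = a * (b / a - 1) by field.
by apply: ler_wpM2l; [exact: ltW | lra].
Qed.

Lemma ln_lt (R : realType) (a b : R) : 0 <= a -> 0 <= b -> (0 < a -> 0 < b) -> a != b ->
  a * (ln b - ln a) < b - a.
Proof.
move=> a0 b0 ab neq; case: (eqVneq a 0) => [a00|an0].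
  rewrite a00 mul0r subr0 lt0r b0 andbT; by move: neq; rewrite a00 eq_sym.
have ap : 0 < a by rewrite lt0r an0.
have bp := ab ap.
have e : ln b - ln a = ln (b / a) by rewrite lnM ?posrE ?invr_gt0 // lnV ?posrE.
have l0 : ln (b / a) != 0.
  apply/eqP => h.
  have hk : expR (ln (b / a)) = b / a by apply: lnK; rewrite posrE divr_gt0.
  rewrite h expR0 in hk.
  have eb : b = a * (b / a) by field.
  by move: neq; rewrite eb -hk mulr1 eqxx.
rewrite e; have h := expR_gt1Dx l0; rewrite lnK ?posrE ?divr_gt0 // in h.
have -> : b - a = a * (b / a - 1) by field.
by rewrite ltr_pM2l //; lra.
Qed.

Lemma sum2 (R : realType) (E : finType) (F : (E * E)%type -> R) :
  \sum_s F s = \sum_x \sum_y F (x, y).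
Proof. by rewrite (pair_bigA _ (fun x y => F (x, y))); apply: eq_bigr => [[x y]]. Qed.

Lemma sum2' (R : realType) (E : finType) (F : (E * E)%type -> R) :
  \sum_s F s = \sum_y \sum_x F (x, y).
Proof. by rewrite sum2 exchange_big. Qed.

Lemma DS1 (R : realType) (E : finType) (F : (E * E)%type -> (E * E)%type -> R) :
  \sum_s \sum_s' F s s' = \sum_x \sum_x' \sum_y \sum_y' F (x, y) (x', y').
Proof.
rewrite sum2; apply: eq_bigr => x _.
under eq_bigr do rewrite sum2.
exact: exchange_big.
Qed.

Lemma DS2 (R : realType) (E : finType) (F : (E * E)%type -> (E * E)%type -> R) :
  \sum_s \sum_s' F s s' = \sum_y \sum_y' \sum_x \sum_x' F (x, y) (x', y').
Proof.
rewrite sum2'; apply: eq_bigr => y _.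
under eq_bigr do rewrite sum2'.
exact: exchange_big.
Qed.

Lemma sum_lt (R : realType) (I : finType) (F G : I -> R) i0 :
  (forall i, F i <= G i) -> F i0 < G i0 -> \sum_i F i < \sum_i G i.
Proof.
move=> h h0; rewrite (bigD1 i0) //= [X in _ < X](bigD1 i0) //=.
by apply: ltr_leD => //; apply: ler_sum => i _.
Qed.

Lemma stat_sum (R : realType) (T : finType) (W : T -> T -> R) (p G : T -> R) :
  (forall s', \sum_s p s * W s s' = p s') ->
  \sum_s \sum_s' p s * W s s' * G s' = \sum_s p s * G s.
Proof.
move=> h; rewrite exchange_big /=; apply: eq_bigr => s' _.
by rewrite -h mulr_suml.
Qed.

Lemma row_sum (R : realType) (T : finType) (W : T -> T -> R) (p G : T -> R) :
  (forall s, \sum_s' W s s' = 1) ->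
  \sum_s \sum_s' p s * W s s' * G s = \sum_s p s * G s.
Proof.
move=> h; apply: eq_bigr => s _.
by rewrite -mulr_suml -mulr_sumr h mulr1.
Qed.

Lemma sum_gt0_ex (R : realType) (I : finType) (F : I -> R) :
  0 < \sum_i F i -> exists i, 0 < F i.
Proof.
move=> h; apply: contrapT => hn; move: h; rewrite ltNge => /negP; apply.
apply: sumr_le0 => i _; rewrite leNgt; apply/negP => hi; apply: hn; by exists i.
Qed.

Lemma mul_gt0_ge0 (R : realType) (a b : R) : 0 <= a -> 0 <= b -> 0 < a * b -> 0 < a /\ 0 < b.
Proof.
move=> a0 b0 ab.
have a0' : a != 0 by apply: contraTneq ab => ->; rewrite mul0r ltxx.
have b0' : b != 0 by apply: contraTneq ab => ->; rewrite mulr0 ltxx.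
by rewrite !lt0r a0 b0 a0' b0'.
Qed.

Lemma min_pos (R : realType) (I : finType) (g : I -> R) :
  (forall i, 0 < g i) -> exists d, 0 < d /\ forall i, d <= g i.
Proof.
move=> hg.
suff : forall l : seq I, exists d, 0 < d /\ forall i, i \in l -> d <= g i.
  by case/(_ (enum I)) => d [d0 hd]; exists d; split=> // i; apply: hd; rewrite mem_enum.
elim=> [|i l [d [d0 hd]]]; first by exists 1.
exists (Num.min d (g i)); split; first by rewrite lt_min d0 hg.
move=> j; rewrite inE => /orP[/eqP->|jl]; rewrite ge_min; apply/orP; [right|left] => //.
exact: hd.
Qed.


Lemma small_pow (R : realType) (l : R) (e : R) : 0 <= l < 1 -> 0 < e -> exists k, l ^+ k <= e.
Proof. move=> /andP[l0 l1] e0. have := @cvg_expr R l.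
rewrite ger0_norm // => /(_ l1) /cvgrPdist_le /(_ e e0) [k _ hk].
exists k; have := hk k (leqnn k). rewrite /= sub0r normrN ger0_norm //. exact: exprn_ge0.
Qed.



Lemma rot1 (Rr : Type) (idx : Rr) (op : Monoid.com_law idx) n (F : nat -> Rr) :
  \big[op/idx]_(k < n) F (k.+1 %% n)%N = \big[op/idx]_(k < n) F k.
Proof.
case: n => [|m]; first by rewrite !big_ord0.
rewrite big_ord_recr big_ord_recl /= modnn Monoid.mulmC; congr (op _ _).
by apply: eq_bigr => k _; rewrite modn_small // ltnS.
Qed.
Local Open Scope classical_set_scope.
Section Main.
Variables (R : realType) (E : finType) (P Q : E -> E -> R) (f : E -> E -> int) (th : R)
  (r pis : (E * E)%type -> R).
Hypotheses (stP : stochastic P) (stQ : stochastic Q) (irrP : irreducible P)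
  (irrQ : irreducible Q) (aperP : aperiodic P) (aperQ : aperiodic Q)
  (thpos : 0 < th) (rpos : forall s, 0 < r s)
  (reig : forall s, \sum_s' Phi P Q f th s s' * r s' = r s)
  (pinv : invariant_prob (tilted P Q f th r) pis).

Local Notation M := (tilted P Q f th r).

Lemma M_eq s s' : M s s' = r s' / r s * expR (th * (f s'.1 s'.2)%:~R) * P s.1 s'.1 * Q s.2 s'.2.
Proof. by rewrite /tilted /Phi !mulrA. Qed.

Lemma M_ge0 s s' : 0 <= M s s'.
Proof.
have P0 := stP.1; have Q0 := stQ.1.
rewrite M_eq; apply: mulr_ge0 (Q0 _ _); apply: mulr_ge0 (P0 _ _).
by rewrite !mulr_ge0 ?expR_ge0 ?invr_ge0 ?ltW.
Qed.

Lemma M_gt0 s s' : 0 < P s.1 s'.1 -> 0 < Q s.2 s'.2 -> 0 < M s s'.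
Proof. by move=> h1 h2; rewrite M_eq !mulr_gt0 ?expR_gt0 ?invr_gt0. Qed.

Lemma M_stoch : stochastic M.
Proof.
split; first exact: M_ge0.
move=> s; rewrite /tilted.
have -> : \sum_s' r s' / r s * Phi P Q f th s s' = (r s)^-1 * \sum_s' Phi P Q f th s s' * r s'.
  by rewrite mulr_sumr; apply: eq_bigr => s' _; rewrite mulrC mulrA mulrC mulrA.
by rewrite reig mulVf // gt_eqF.
Qed.

Lemma M_powpos n s s' : 0 < fmx_pow P n s.1 s'.1 -> 0 < fmx_pow Q n s.2 s'.2 ->
  0 < fmx_pow M n s s'.
Proof.
elim: n s' => [|n IH] s' /=.
  rewrite /fmx_one; case: (s.1 =P s'.1) => e1; last by rewrite ltxx.
  case: (s.2 =P s'.2) => e2; last by rewrite ltxx.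
  move=> _ _.
  have -> : s = s' by move: e1 e2; case: s => a b; case: s' => c d /= -> ->.
  by rewrite eqxx.
move=> /sum_gt0_ex [u hu] /sum_gt0_ex [v hv].
have [hu1 hu2] := mul_gt0_ge0 (pow_ge0 _ _ _ stP.1) (stP.1 _ _) hu.
have [hv1 hv2] := mul_gt0_ge0 (pow_ge0 _ _ _ stQ.1) (stQ.1 _ _) hv.
apply: (@sum_pos _ _ _ (u, v)).
  by move=> z; rewrite mulr_ge0 ?M_ge0 // pow_ge0 //; exact: M_ge0.
by rewrite mulr_gt0 //; [apply: IH | apply: M_gt0].
Qed.

Lemma M_prim : exists N d, 0 < d /\ forall a b, d <= fmx_pow M N a b.
Proof.
have [NP hP] := primitive stP.1 irrP aperP.
have [NQ hQ] := primitive stQ.1 irrQ aperQ.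
exists (maxn NP NQ).
have := @min_pos R _ (fun ab : (E * E) * (E * E) => fmx_pow M (maxn NP NQ) ab.1 ab.2).
case=> [ab|d [d0 hd]]; last by exists d; split=> // a b; apply: (hd (a, b)).
by apply: M_powpos; [apply: hP; rewrite leq_maxl | apply: hQ; rewrite leq_maxr].
Qed.

Lemma pis_pos s : 0 < pis s.
Proof.
have [N [d [d0 hd]]] := M_prim.
case: pinv => p0 p1 pst.
rewrite -(stat_pow N s pinv).
have [u hu] : exists u, 0 < pis u by apply: sum_gt0_ex; rewrite p1 ltr01.
apply: (@sum_pos _ _ _ u); first by move=> z; rewrite mulr_ge0 // pow_ge0 //; exact: M_ge0.
by rewrite mulr_gt0 // (lt_le_trans d0).
Qed.



Lemma muT_conv (s0 : E * E) :
  let muT := lagged_mean M pis f in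
  let L := \sum_s pis s * \sum_u pis u * (f s.1 u.2)%:~R in
  muT @ \oo --> L.
Proof.
move=> muT L.
have [N [d [d0 hd]]] := M_prim.
have stM := M_stoch.
pose g (s u : E * E) : R := (f s.1 u.2)%:~R.
have hg s := geom_conv (g s) s0 stM pinv d0 hd.
set l := 1 - #|{: E * E}|%:R * d.
have /andP[l0 l1] : 0 <= l < 1 by case: (hg s0).
pose C := \sum_s pis s * (\sum_w `|g s w| - - \sum_w `|g s w|).
have C0 : 0 <= C.
  apply: sumr_ge0 => s _; rewrite mulr_ge0 //; first by case: pinv.
  by rewrite opprK addr_ge0 // sumr_ge0.
have bnd k Tt : (k * N <= Tt)%N ->
    `|lagged_mean M pis f Tt - \sum_s pis s * \sum_u pis u * g s u| <= C * l ^+ k.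
  move=> hk.
  have -> : lagged_mean M pis f Tt = \sum_s pis s * app (fmx_pow M Tt) (g s) s.
    rewrite /lagged_mean /app; apply: eq_bigr => s _; rewrite mulr_sumr.
    by apply: eq_bigr => u _; rewrite mulrA.
  rewrite -sumrB /C mulr_suml; apply: le_trans (ler_norm_sum _ _ _) _.
  apply: ler_sum => s _; rewrite -mulrBr normrM -mulrA.
  have p0 : 0 <= pis s by case: pinv.
  rewrite ger0_norm //; apply: ler_wpM2l => //.
  by have [_ h] := hg s; apply: h.
apply/(@cvgrPdist_le _ R^o) => e e0.
have [k hk] : exists k, l ^+ k <= e / (C + 1).
  by apply: small_pow; [rewrite l0 l1 | rewrite divr_gt0 // ltr_pwDr].
exists (k * N)%N => // Tt /= hT.
rewrite distrC; apply: le_trans (bnd k Tt hT) _.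
apply: le_trans (_ : C * (e / (C + 1)) <= e).
  by apply: ler_wpM2l.
have h1 : C / (C + 1) <= 1 by rewrite ler_pdivrMr ?mul1r ?lerDl // ltr_pwDr.
have -> : C * (e / (C + 1)) = (C / (C + 1)) * e by rewrite mulrA mulrAC.
by rewrite -[X in _ <= X]mul1r ler_wpM2r // ltW.
Qed.


Definition p1 x := \sum_y pis (x, y).
Definition p2 y := \sum_x pis (x, y).
Definition JA x x' := \sum_y \sum_y' pis (x, y) * M (x, y) (x', y').
Definition JB y y' := \sum_x \sum_x' pis (x, y) * M (x, y) (x', y').
Definition A x x' := JA x x' / p1 x.
Definition B y y' := JB y y' / p2 y.
Definition K (s s' : E * E) := A s.1 s'.1 * B s.2 s'.2.
Definition lam (s : E * E) := p1 s.1 * p2 s.2.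

Lemma pis_ge0 s : 0 <= pis s. Proof. by case: pinv. Qed.

Lemma p1_pos x : 0 < p1 x.
Proof. apply: (@sum_pos _ _ (fun y => pis (x, y)) x); [move=> y; exact: pis_ge0 | exact: pis_pos]. Qed.
Lemma p2_pos y : 0 < p2 y.
Proof. apply: (@sum_pos _ _ (fun x => pis (x, y)) y); [move=> x; exact: pis_ge0 | exact: pis_pos]. Qed.

Lemma sum_p1 : \sum_x p1 x = 1.
Proof. by case: pinv => _ h _; rewrite -h sum2. Qed.
Lemma sum_p2 : \sum_y p2 y = 1.
Proof. by case: pinv => _ h _; rewrite -h sum2'. Qed.

Lemma Mrow s : \sum_s' M s s' = 1. Proof. by case: M_stoch. Qed.
Lemma Mcol s' : \sum_s pis s * M s s' = pis s'. Proof. by case: pinv. Qed.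

Lemma JA_ge0 x x' : 0 <= JA x x'.
Proof. by apply: sumr_ge0 => y _; apply: sumr_ge0 => y' _; rewrite mulr_ge0 ?pis_ge0 ?M_ge0. Qed.
Lemma JB_ge0 y y' : 0 <= JB y y'.
Proof. by apply: sumr_ge0 => x _; apply: sumr_ge0 => x' _; rewrite mulr_ge0 ?pis_ge0 ?M_ge0. Qed.
Lemma A_ge0 x x' : 0 <= A x x'.
Proof. by rewrite divr_ge0 ?JA_ge0 // ltW // p1_pos. Qed.
Lemma B_ge0 y y' : 0 <= B y y'.
Proof. by rewrite divr_ge0 ?JB_ge0 // ltW // p2_pos. Qed.
Lemma K_ge0 s s' : 0 <= K s s'.
Proof. by rewrite mulr_ge0 ?A_ge0 ?B_ge0. Qed.

Lemma JA_row x : \sum_x' JA x x' = p1 x.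
Proof.
rewrite /JA /p1 exchange_big /=; apply: eq_bigr => y _.
by rewrite -[RHS]mulr1 -(Mrow (x, y)) sum2 mulr_sumr; apply: eq_bigr => x' _; rewrite mulr_sumr.
Qed.

Lemma JA_col x' : \sum_x JA x x' = p1 x'.
Proof.
rewrite /JA /p1.
have -> : \sum_x \sum_y \sum_y' pis (x, y) * M (x, y) (x', y') =
          \sum_y' \sum_x \sum_y pis (x, y) * M (x, y) (x', y').
  by under eq_bigr do rewrite exchange_big; rewrite exchange_big.
apply: eq_bigr => y' _.
by rewrite -(sum2 (fun s => pis s * M s (x', y'))) Mcol.
Qed.

Lemma JB_row y : \sum_y' JB y y' = p2 y.
Proof.
rewrite /JB /p2 exchange_big /=; apply: eq_bigr => x _.
rewrite -[RHS]mulr1 -(Mrow (x, y)) sum2' mulr_sumr; apply: eq_bigr => y' _.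
by rewrite mulr_sumr.
Qed.

Lemma JB_col y' : \sum_y JB y y' = p2 y'.
Proof.
rewrite /JB /p2.
have -> : \sum_y \sum_x \sum_x' pis (x, y) * M (x, y) (x', y') =
          \sum_x' \sum_y \sum_x pis (x, y) * M (x, y) (x', y').
  by under eq_bigr do rewrite exchange_big; rewrite exchange_big.
apply: eq_bigr => x' _.
by rewrite -(sum2' (fun s => pis s * M s (x', y'))) Mcol.
Qed.

Lemma p1A x x' : p1 x * A x x' = JA x x'.
Proof. by rewrite /A mulrC divfK // gt_eqF // p1_pos. Qed.
Lemma p2B y y' : p2 y * B y y' = JB y y'.
Proof. by rewrite /B mulrC divfK // gt_eqF // p2_pos. Qed.

Lemma A_row x : \sum_x' A x x' = 1.
Proof. by rewrite /A -mulr_suml JA_row divff // gt_eqF // p1_pos. Qed.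
Lemma B_row y : \sum_y' B y y' = 1.
Proof. by rewrite /B -mulr_suml JB_row divff // gt_eqF // p2_pos. Qed.

Lemma prod_sum (I J : finType) (a : I -> R) (b : J -> R) :
  \sum_i \sum_j a i * b j = (\sum_i a i) * (\sum_j b j).
Proof. by rewrite mulr_suml; apply: eq_bigr => i _; rewrite mulr_sumr. Qed.

Lemma K_row s : \sum_s' K s s' = 1.
Proof. by rewrite sum2 /K /= (prod_sum (A s.1) (B s.2)) A_row B_row mulr1. Qed.

Lemma lam_stat s' : \sum_s lam s * K s s' = lam s'.
Proof.
rewrite sum2 /lam /K /=.
have -> : \sum_x \sum_y p1 x * p2 y * (A x s'.1 * B y s'.2) =
          \sum_x \sum_y (p1 x * A x s'.1) * (p2 y * B y s'.2).
  by apply: eq_bigr => x _; apply: eq_bigr => y _; ring.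
rewrite (prod_sum (fun x => p1 x * A x s'.1) (fun y => p2 y * B y s'.2)); congr (_ * _).
  by under eq_bigr do rewrite p1A; rewrite JA_col.
by under eq_bigr do rewrite p2B; rewrite JB_col.
Qed.

Lemma margA_K (h : E -> E -> R) :
  \sum_s \sum_s' lam s * K s s' * h s.1 s'.1 = \sum_x \sum_x' JA x x' * h x x'.
Proof.
rewrite DS1; apply: eq_bigr => x _; apply: eq_bigr => x' _ /=.
have -> : \sum_y \sum_y' p1 x * p2 y * (A x x' * B y y') * h x x' =
          \sum_y \sum_y' (JA x x' * h x x') * (p2 y * B y y').
  by apply: eq_bigr => y _; apply: eq_bigr => y' _; rewrite -p1A /lam /K /=; ring.
under eq_bigr do rewrite -mulr_sumr; rewrite -mulr_sumr.
rewrite (eq_bigr (fun y => p2 y)) ?sum_p2 ?mulr1 //.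
by move=> y _; rewrite -mulr_sumr B_row mulr1.
Qed.

Lemma margB_K (h : E -> E -> R) :
  \sum_s \sum_s' lam s * K s s' * h s.2 s'.2 = \sum_y \sum_y' JB y y' * h y y'.
Proof.
rewrite DS2; apply: eq_bigr => y _; apply: eq_bigr => y' _ /=.
have -> : \sum_x \sum_x' p1 x * p2 y * (A x x' * B y y') * h y y' =
          \sum_x \sum_x' (JB y y' * h y y') * (p1 x * A x x').
  by apply: eq_bigr => x _; apply: eq_bigr => x' _; rewrite -p2B /lam /K /=; ring.
under eq_bigr do rewrite -mulr_sumr; rewrite -mulr_sumr.
rewrite (eq_bigr (fun x => p1 x)) ?sum_p1 ?mulr1 //.
by move=> x _; rewrite -mulr_sumr A_row mulr1.
Qed.

Lemma margA_M (h : E -> E -> R) :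
  \sum_s \sum_s' pis s * M s s' * h s.1 s'.1 = \sum_x \sum_x' JA x x' * h x x'.
Proof.
rewrite DS1; apply: eq_bigr => x _; apply: eq_bigr => x' _ /=.
by rewrite /JA mulr_suml; apply: eq_bigr => y _; rewrite mulr_suml.
Qed.

Lemma margB_M (h : E -> E -> R) :
  \sum_s \sum_s' pis s * M s s' * h s.2 s'.2 = \sum_y \sum_y' JB y y' * h y y'.
Proof.
rewrite DS2; apply: eq_bigr => y _; apply: eq_bigr => y' _ /=.
by rewrite /JB mulr_suml; apply: eq_bigr => x _; rewrite mulr_suml.
Qed.

Lemma M_pos_PQ s s' : 0 < M s s' -> 0 < P s.1 s'.1 /\ 0 < Q s.2 s'.2.
Proof.
rewrite M_eq => h.
have P0 := stP.1; have Q0 := stQ.1.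
have c0 : 0 <= r s' / r s * expR (th * (f s'.1 s'.2)%:~R).
  by rewrite mulr_ge0 ?expR_ge0 // divr_ge0 // ltW.
have [h1 h2] := mul_gt0_ge0 (mulr_ge0 c0 (P0 _ _)) (Q0 _ _) h.
by have [_ h3] := mul_gt0_ge0 c0 (P0 _ _) h1.
Qed.

Lemma M_pos_K s s' : 0 < M s s' -> 0 < K s s'.
Proof.
move=> h; rewrite /K mulr_gt0 //.
  rewrite /A divr_gt0 ?p1_pos //; apply: (@sum_pos _ _ _ s.2).
    by move=> y; apply: sumr_ge0 => y' _; rewrite mulr_ge0 ?pis_ge0 ?M_ge0.
  apply: (@sum_pos _ _ _ s'.2); first by move=> y'; rewrite mulr_ge0 ?pis_ge0 ?M_ge0.
  by rewrite -!surjective_pairing mulr_gt0 ?pis_pos.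
rewrite /B divr_gt0 ?p2_pos //; apply: (@sum_pos _ _ _ s.1).
  by move=> x; apply: sumr_ge0 => x' _; rewrite mulr_ge0 ?pis_ge0 ?M_ge0.
apply: (@sum_pos _ _ _ s'.1); first by move=> x'; rewrite mulr_ge0 ?pis_ge0 ?M_ge0.
by rewrite -!surjective_pairing mulr_gt0 ?pis_pos.
Qed.

Lemma K_pos_M s s' : 0 < K s s' -> 0 < M s s'.
Proof.
move=> h; have [hA hB] := mul_gt0_ge0 (A_ge0 _ _) (B_ge0 _ _) h.
have hJA : 0 < JA s.1 s'.1 by rewrite -p1A mulr_gt0 ?p1_pos.
have hJB : 0 < JB s.2 s'.2 by rewrite -p2B mulr_gt0 ?p2_pos.
have [y /sum_gt0_ex [y' hy]] := sum_gt0_ex hJA.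
have [_ hM1] := mul_gt0_ge0 (pis_ge0 _) (M_ge0 _ _) hy.
have [hP _] := M_pos_PQ hM1.
have [x /sum_gt0_ex [x' hx]] := sum_gt0_ex hJB.
have [_ hM2] := mul_gt0_ge0 (pis_ge0 _) (M_ge0 _ _) hx.
have [_ hQ] := M_pos_PQ hM2.
by apply: M_gt0.
Qed.

Definition Fv (s : E * E) : R := (f s.1 s.2)%:~R.
Definition G (s s' : E * E) : R :=
  ln (r s') - ln (r s) + th * Fv s' + (ln (P s.1 s'.1) - ln (A s.1 s'.1)) +
  (ln (Q s.2 s'.2) - ln (B s.2 s'.2)).

Lemma lnM_exp s s' : 0 < M s s' -> ln (M s s') =
  ln (r s') - ln (r s) + th * Fv s' + ln (P s.1 s'.1) + ln (Q s.2 s'.2).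
Proof.
move=> h; have [hP hQ] := M_pos_PQ h.
have r1 := rpos s; have r2 := rpos s'.
rewrite M_eq lnM ?posrE ?mulr_gt0 ?divr_gt0 ?expR_gt0 ?invr_gt0 //.
rewrite lnM ?posrE ?mulr_gt0 ?divr_gt0 ?expR_gt0 ?invr_gt0 //.
rewrite lnM ?posrE ?mulr_gt0 ?divr_gt0 ?expR_gt0 ?invr_gt0 //.
rewrite lnM ?posrE ?invr_gt0 // lnV ?posrE // expRK /Fv.
ring.
Qed.

Lemma lnMK s s' : 0 < M s s' -> ln (M s s') - ln (K s s') = G s s'.
Proof.
move=> h; have hK := M_pos_K h.
have [hA hB] := mul_gt0_ge0 (A_ge0 _ _) (B_ge0 _ _) hK.
rewrite lnM_exp // /K lnM ?posrE // /G; ring.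
Qed.

Lemma termK s s' : K s s' * (ln (M s s') - ln (K s s')) = K s s' * G s s'.
Proof.
case: (eqVneq (K s s') 0) => [->|k0]; first by rewrite !mul0r.
have hK : 0 < K s s' by rewrite lt0r k0 K_ge0.
by rewrite lnMK // K_pos_M.
Qed.

Lemma termM s s' : M s s' * (ln (M s s') - ln (K s s')) = M s s' * G s s'.
Proof.
case: (eqVneq (M s s') 0) => [->|m0]; first by rewrite !mul0r.
have hM : 0 < M s s' by rewrite lt0r m0 M_ge0.
by rewrite lnMK.
Qed.

Lemma DSD (F1 F2 : E * E -> E * E -> R) :
  \sum_s \sum_s' (F1 s s' + F2 s s') = \sum_s \sum_s' F1 s s' + \sum_s \sum_s' F2 s s'.
Proof. by rewrite -big_split; apply: eq_bigr => s _; rewrite big_split. Qed.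
Lemma DSN (F1 F2 : E * E -> E * E -> R) :
  \sum_s \sum_s' (F1 s s' - F2 s s') = \sum_s \sum_s' F1 s s' - \sum_s \sum_s' F2 s s'.
Proof. by rewrite -sumrB; apply: eq_bigr => s _; rewrite sumrB. Qed.
Lemma DSO (F1 : E * E -> E * E -> R) :
  \sum_s \sum_s' (- F1 s s') = - \sum_s \sum_s' F1 s s'.
Proof. by rewrite -sumrN; apply: eq_bigr => s _; rewrite sumrN. Qed.
Lemma DSZ (c : R) (F1 : E * E -> E * E -> R) :
  \sum_s \sum_s' (c * F1 s s') = c * \sum_s \sum_s' F1 s s'.
Proof. by rewrite mulr_sumr; apply: eq_bigr => s _; rewrite mulr_sumr. Qed.

Definition CA := \sum_x \sum_x' JA x x' * (ln (P x x') - ln (A x x')).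
Definition CB := \sum_y \sum_y' JB y y' * (ln (Q y y') - ln (B y y')).

Lemma Zval (W : E * E -> E * E -> R) (w : E * E -> R) :
  (forall s', \sum_s w s * W s s' = w s') -> (forall s, \sum_s' W s s' = 1) ->
  (forall h, \sum_s \sum_s' w s * W s s' * h s.1 s'.1 = \sum_x \sum_x' JA x x' * h x x') ->
  (forall h, \sum_s \sum_s' w s * W s s' * h s.2 s'.2 = \sum_y \sum_y' JB y y' * h y y') ->
  \sum_s \sum_s' w s * W s s' * G s s' = th * \sum_s w s * Fv s + CA + CB.
Proof.
move=> hst hrow hA hB.
have e : forall s s', w s * W s s' * G s s' =
   w s * W s s' * ln (r s') - w s * W s s' * ln (r s) + th * (w s * W s s' * Fv s') +
   w s * W s s' * (ln (P s.1 s'.1) - ln (A s.1 s'.1)) +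
   w s * W s s' * (ln (Q s.2 s'.2) - ln (B s.2 s'.2)).
  by move=> s s'; rewrite /G; ring.
under eq_bigr do under eq_bigr do rewrite e.
rewrite !DSD DSO DSZ (stat_sum _ hst) (row_sum _ _ hrow) addrN add0r (stat_sum _ hst).
by rewrite (hA (fun x x' => ln (P x x') - ln (A x x'))) (hB (fun y y' => ln (Q y y') - ln (B y y'))).
Qed.

Lemma ZK_lt : (exists s s', K s s' != M s s') ->
  \sum_s \sum_s' lam s * K s s' * G s s' < 0.
Proof.
case=> s0 [s0' hne].
have lam0 s : 0 < lam s by rewrite mulr_gt0 ?p1_pos ?p2_pos.
have h0 : \sum_s \sum_s' lam s * (M s s' - K s s') = 0.
  by apply/big1 => s _; rewrite -mulr_sumr sumrB Mrow K_row subrr mulr0.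
apply: (@lt_le_trans _ _ (\sum_s \sum_s' lam s * (M s s' - K s s'))); last by rewrite h0.
have le1 s s' : lam s * K s s' * G s s' <= lam s * (M s s' - K s s').
  rewrite -mulrA -termK; apply: ler_wpM2l; first exact: ltW.
  by apply: ln_le; rewrite ?K_ge0 ?M_ge0 //; apply: K_pos_M.
apply: (@sum_lt _ _ _ _ s0) => [s|]; first by apply: ler_sum => s' _.
apply: (@sum_lt _ _ _ _ s0') => // .
rewrite -mulrA -termK ltr_pM2l //.
by apply: ln_lt; rewrite ?K_ge0 ?M_ge0 //; apply: K_pos_M.
Qed.

Lemma ZM_ge : 0 <= \sum_s \sum_s' pis s * M s s' * G s s'.
Proof.
have h0 : \sum_s \sum_s' pis s * (K s s' - M s s') = 0.
  by apply: big1 => s _; rewrite -mulr_sumr sumrB Mrow K_row subrr mulr0.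
rewrite -oppr_le0 -sumrN; under eq_bigr do rewrite -sumrN.
apply: (@le_trans _ _ (\sum_s \sum_s' pis s * (K s s' - M s s'))); last by rewrite h0.
apply: ler_sum => s _; apply: ler_sum => s' _.
have -> : - (pis s * M s s' * G s s') = pis s * (M s s' * (ln (K s s') - ln (M s s'))).
  have -> : M s s' * (ln (K s s') - ln (M s s')) = - (M s s' * (ln (M s s') - ln (K s s'))) by ring.
  by rewrite termM; ring.
apply: ler_wpM2l; first exact: pis_ge0.
by apply: ln_le; rewrite ?K_ge0 ?M_ge0 //; apply: M_pos_K.
Qed.

Lemma cycle_id (n : nat) (x y : nat -> E) :
  is_cycle P n x -> is_cycle Q n y -> (forall s s', K s s' = M s s') ->
  expR (th * \sum_(k < n) Fv (x k, y k)) *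
    (\prod_(k < n) P (x k) (x (k.+1 %% n)%N) * \prod_(k < n) Q (y k) (y (k.+1 %% n)%N)) =
  \prod_(k < n) A (x k) (x (k.+1 %% n)%N) * \prod_(k < n) B (y k) (y (k.+1 %% n)%N).
Proof.
move=> [n0 cx] [_ cy] hKM.
pose s k := (x k, y k).
have e1 : \prod_(k < n) M (s k) (s (k.+1 %% n)%N) =
   \prod_(k < n) A (x k) (x (k.+1 %% n)%N) * \prod_(k < n) B (y k) (y (k.+1 %% n)%N).
  by rewrite -big_split /=; apply: eq_bigr => k _; rewrite -hKM.
rewrite -e1.
have e2 : \prod_(k < n) M (s k) (s (k.+1 %% n)%N) =
  (\prod_(k < n) r (s (k.+1 %% n)%N) / \prod_(k < n) r (s k)) *
  \prod_(k < n) expR (th * Fv (s (k.+1 %% n)%N)) *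
  \prod_(k < n) P (x k) (x (k.+1 %% n)%N) * \prod_(k < n) Q (y k) (y (k.+1 %% n)%N).
  by rewrite -prodf_div -!big_split /=; apply: eq_bigr => k _; rewrite M_eq.
rewrite e2 (rot1 _ _ (fun k => r (s k))) divff; last by rewrite gt_eqF // prodr_gt0.
rewrite mul1r -expR_sum (rot1 _ _ (fun k => th * Fv (s k))) -mulr_sumr.
by rewrite mulrA.
Qed.

Lemma K_neq_M :
  (forall T : nat, (1 <= T)%N ->
     exists (n : nat) (x y : nat -> E), is_cycle P n x /\ is_cycle Q n y /\
       \sum_(k < n) f (x k) (y k) <> \sum_(k < n) f (x k) (y ((k + T) %% n)%N)) ->
  exists s s', K s s' != M s s'.
Proof.
move=> C2; apply: contrapT => hn.
have hKM : forall s s', K s s' = M s s'.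
  move=> s s'; case: (eqVneq (K s s') (M s s')) => // h; exfalso; apply: hn; by exists s, s'.
have [n [x [y [cx [cy hne]]]]] := C2 1%N isT.
pose y' k := y ((k + 1) %% n)%N.
have n0 : (0 < n)%N by case: cx.
have cy' : is_cycle Q n y'.
  split=> // k kn; rewrite /y'.
  have -> : ((k.+1 %% n + 1) %% n)%N = (((k + 1) %% n).+1 %% n)%N by rewrite !addn1.
  by case: cy => _ h; apply: h; rewrite ltn_mod.
have i1 := cycle_id cx cy hKM.
have i2 := cycle_id cx cy' hKM.
have eQ : \prod_(k < n) Q (y' k) (y' (k.+1 %% n)%N) = \prod_(k < n) Q (y k) (y (k.+1 %% n)%N).
  rewrite -(rot1 _ _ (fun k => Q (y k) (y (k.+1 %% n)%N))); apply: eq_bigr => k _.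
  by rewrite /y' !addn1.
have eB : \prod_(k < n) B (y' k) (y' (k.+1 %% n)%N) = \prod_(k < n) B (y k) (y (k.+1 %% n)%N).
  rewrite -(rot1 _ _ (fun k => B (y k) (y (k.+1 %% n)%N))); apply: eq_bigr => k _.
  by rewrite /y' !addn1.
rewrite eQ eB -i1 in i2.
have c0 : 0 < \prod_(k < n) P (x k) (x (k.+1 %% n)%N) * \prod_(k < n) Q (y k) (y (k.+1 %% n)%N).
  rewrite mulr_gt0 // prodr_gt0 // => k _; [by case: cx => _; apply | by case: cy => _; apply].
have := mulIf (negbT (gt_eqF c0)) i2 => /expR_inj /(mulfI (negbT (gt_eqF thpos))).
rewrite /Fv /= -!rmorph_sum => /intr_inj.
by move=> e; apply: hne; rewrite -e.
Qed.

Lemma main_ineq :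
  (forall T : nat, (1 <= T)%N ->
     exists (n : nat) (x y : nat -> E), is_cycle P n x /\ is_cycle Q n y /\
       \sum_(k < n) f (x k) (y k) <> \sum_(k < n) f (x k) (y ((k + T) %% n)%N)) ->
  \sum_s lam s * Fv s < \sum_s pis s * Fv s.
Proof.
move=> C2.
have hK := Zval lam_stat K_row margA_K margB_K.
have hM := Zval Mcol Mrow margA_M margB_M.
have lt := ZK_lt (K_neq_M C2); have ge := ZM_ge.
rewrite hK in lt; rewrite hM in ge.
have : th * \sum_s lam s * Fv s < th * \sum_s pis s * Fv s by lra.
by rewrite ltr_pM2l.
Qed.

Lemma L_eq : \sum_s pis s * \sum_u pis u * (f s.1 u.2)%:~R = \sum_s lam s * Fv s.
Proof.
have -> : \sum_s pis s * \sum_u pis u * (f s.1 u.2)%:~R =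
          \sum_s \sum_u pis s * pis u * (f s.1 u.2)%:~R.
  by apply: eq_bigr => s _; rewrite mulr_sumr; apply: eq_bigr => u _; rewrite mulrA.
rewrite DS1 sum2; apply: eq_bigr => x _.
have -> : \sum_x' \sum_y \sum_y' pis (x, y) * pis (x', y') * (f (x, y).1 (x', y').2)%:~R =
          \sum_y' \sum_y \sum_x' pis (x, y) * pis (x', y') * (f x y')%:~R.
  under eq_bigr do rewrite exchange_big; rewrite exchange_big.
  by apply: eq_bigr => y' _; rewrite exchange_big.
apply: eq_bigr => y' _; rewrite /lam /Fv /p1 /p2 /=.
rewrite -(prod_sum (fun y => pis (x, y)) (fun x0 => pis (x0, y'))) mulr_suml.
by apply: eq_bigr => y _; rewrite mulr_suml.
Qed.

End Main.

Unset Implicit Arguments.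
Set Strict Implicit.

Theorem lemma5p9 (R : realType) (E : finType) (P Q : E -> E -> R)
  (f : E -> E -> int) (piP piQ : E -> R) (thetas : R)
  (rs pis : (E * E)%type -> R) :
  (* P, Q irreducible aperiodic stochastic, with invariant probabilities *)
  stochastic P -> irreducible P -> aperiodic P ->
  stochastic Q -> irreducible Q -> aperiodic Q ->
  invariant_prob P piP -> invariant_prob Q piQ ->
  (* gcd of the values of f is 1 *)
  \big[gcdn/0%N]_(s : E * E) `|f s.1 s.2|%N = 1%N ->
  (* mu = pi(f) < 0, pi = piP (x) piQ *)
  \sum_(s : E * E) piP s.1 * piQ s.2 * (f s.1 s.2)%:~R < 0 ->
  (* (C1) *)
  (exists (n : nat) (x y : nat -> E), is_cycle P n x /\ is_cycle Q n y /\
     (0 < \sum_(k < n) f (x k) (y k))%R) ->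
  (* (C2) *)
  (forall T : nat, (1 <= T)%N ->
     exists (n : nat) (x y : nat -> E), is_cycle P n x /\ is_cycle Q n y /\
       \sum_(k < n) f (x k) (y k) <> \sum_(k < n) f (x k) (y ((k + T) %% n)%N)) ->
  (* theta_star : the unique positive solution of phi(theta) = 1 *)
  0 < thetas -> spectral_radius (Phi P Q f thetas) = 1 ->
  (forall theta : R, 0 < theta -> spectral_radius (Phi P Q f theta) = 1 ->
     theta = thetas) ->
  (* r_star : positive right eigenvector of Phi(theta_star) for eigenvalue 1 *)
  (forall s, 0 < rs s) ->
  (forall s, \sum_(s' : E * E) Phi P Q f thetas s s' * rs s' = rs s) ->
  (* pi_star : invariant probability vector of R_star *)
  invariant_prob (tilted P Q f thetas rs) pis ->
  let muT := lagged_mean (tilted P Q f thetas rs) pis f in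
  let pi1 := fun x : E => \sum_(y : E) pis (x, y) in
  let pi2 := fun y : E => \sum_(x : E) pis (x, y) in
  let mu_inf := \sum_(s : E * E) pi1 s.1 * pi2 s.2 * (f s.1 s.2)%:~R in
  muT @ \oo --> mu_inf /\
  mu_inf < \sum_(s : E * E) pis s * (f s.1 s.2)%:~R.
Proof.
move=> stP irrP aperP stQ irrQ aperQ _ _ _ _ _ C2 thpos _ _ rpos reig pinv muT pi1 pi2 mu_inf.
have [n [x [y [[n0 _] _]]]] := C2 1%N isT.
have emu : mu_inf = \sum_s lam pis s * Fv R f s by [].
split.
  have := muT_conv stP stQ irrP irrQ aperP aperQ rpos reig pinv (x 0%N, y 0%N).
  by rewrite /= (L_eq f pis) -emu.
by rewrite emu; apply: (main_ineq stP stQ irrP irrQ aperP aperQ thpos rpos reig pinv C2).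
Qed.
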